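(* Let $p$ be an odd prime. Then $$\sum_{k=0}^{[p/4]}\binom{4k}{2k}\frac1{32^k}\equiv\begin{cases}1\pmod p&\text{if }p\equiv\pm1,\pm3\pmod{16},\\-1\pmod p&\text{if }p\equiv\pm5,\pm7\pmod{16}.\end{cases}$$
   Context: $[x]$ is the greatest integer $\le x$. *)

(* Defs.v *)
From HB Require Import structures.
From mathcomp Require Import all_boot all_order all_algebra.
Set Implicit Arguments. Unset Strict Implicit. Unset Printing Implicit Defensive.
Import Order.TTheory GRing.Theory Num.Theory.

(* Main.v *)
Require Import Defs.
From HB Require Import structures.
From mathcomp Require Import all_boot all_order all_algebra.
Import GRing.Theory.
Local Open Scope ring_scope.
From mathcomp Require Import all_field.
From mathcomp Require Import zify ring.

Set Implicit Arguments. Unset Strict Implicit. Unset Printing Implicit Defensive.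
Lemma cbin_rec n : (n.+1 * 'C(n.+1.*2, n.+1) = 2 * n.*2.+1 * 'C(n.*2, n))%N.
Proof.
have e1 := mul_bin_diag (n.*2.+2) n.
have e2 := mul_bin_diag (n.*2.+1) n.
have e3 : 'C(n.*2.+1, n.+1) = 'C(n.*2.+1, n).
  by rewrite -(bin_sub (_ : n <= n.*2.+1)%N) ?subSn -?addnn ?addnK //; lia.
rewrite /= in e1 e2; rewrite doubleS -e1 -mulnA e2 e3; lia.
Qed.

Lemma cbin_Fp (p h n : nat) : prime p -> p = h.*2.+1 -> (n <= h)%N ->
  ('C(n.*2, n)%:R : 'F_p) = (-4) ^+ n * 'C(h, n)%:R.
Proof.
move=> pp ph; elim: n => [|n IH] le; first by rewrite !bin0 expr0 mul1r.
have nz : (n.+1%:R : 'F_p) != 0.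
  by rewrite -(dvdn_pcharf (pchar_Fp pp)); apply/negP => /dvdn_leq; lia.
apply: (mulfI nz); rewrite -natrM cbin_rec natrM IH; last lia.
rewrite [RHS]mulrCA -natrM mul_bin_left !natrM.
have p0 : (p%:R : 'F_p) = 0 := pchar_Fp_0 pp.
have -> : ((h - n)%:R : 'F_p) = h%:R - n%:R by rewrite natrB //; lia.
have {p0} : ((h.*2 + 1)%:R : 'F_p) = 0 by rewrite addn1 -ph.
rewrite natrD -muln2 natrM => p0.
rewrite exprS (_ : n.*2.+1 = n * 2 + 1)%N; last lia.
rewrite natrD natrM.
apply/eqP; rewrite -subr_eq0 (_ : _ - _ = 2 * (-4)^+n * 'C(h,n)%:R * (h%:R * 2 + 1)).
  by rewrite p0 mulr0.
ring.
Qed.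
Lemma pair_sum (R : nmodType) (G : nat -> R) n :
  \sum_(0 <= i < n.*2) G i = \sum_(0 <= k < n) (G k.*2 + G k.*2.+1).
Proof.
elim: n => [|n IH]; first by rewrite !big_geq.
rewrite doubleS !big_nat_recr //= IH -addrA.
by [].
Qed.

Lemma even_sum (R : comNzRingType) (t : R) h :
  \sum_(i < h.+1) (t^+i *+ 'C(h,i) + (-t)^+i *+ 'C(h,i)) =
  2 * \sum_(0 <= k < (h %/ 2).+1) 'C(h, k.*2)%:R * (t * t)^+k.
Proof.
set G := fun i => t^+i *+ 'C(h,i) + (-t)^+i *+ 'C(h,i).
rewrite -(big_mkord xpredT G).
have le : (h.+1 <= (h %/ 2).+1.*2)%N.
  by rewrite -muln2 mulSn; have := leq_trunc_div h 2; have := ltn_ceil h (isT : (0 < 2)%N); lia.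
rewrite (_ : \sum_(0 <= i < h.+1) G i = \sum_(0 <= i < (h %/ 2).+1.*2) G i).
  rewrite pair_sum mulr_sumr; apply: eq_bigr => k _.
  have e1 : forall x : R, x ^+ k.*2 = (x * x) ^+ k by move=> x; rewrite -mul2n exprM expr2.
  by rewrite /G exprSr [(-t)^+ _.+1]exprSr !e1 mulrNN mulrN mulNrn addrN addr0 -mulr2n mulrnAl -mulrnAr mulr_natl mul1r.
rewrite [RHS](@big_cat_nat _ _ _ h.+1) //= [X in _ = _ + X]big1_seq ?addr0 //.
move=> i /andP[_]; rewrite mem_index_iota => /andP[hi _].
by rewrite /G bin_small // !mulr0n addr0.
Qed.
Lemma key (L : fieldType) (u w s E A B T : L) : (2:L) != 0 -> s*s = 2 -> u*w = s ->
  u*u = 2+s -> w*w = 2-s -> A + B = 2*T ->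
  (u*A*E = u /\ w*B*E = w /\ s*E = s -> T = 1) /\
  (u*A*E = -u /\ w*B*E = -w /\ s*E = s -> T = -1) /\
  (u*A*E = w /\ w*B*E = -u /\ s*E = -s -> T = 1) /\
  (u*A*E = -w /\ w*B*E = u /\ s*E = -s -> T = -1).
Proof.
move=> h2 hss huw huu hww hAB.
have s0 : s != 0 by apply: contraNneq h2 => s0; rewrite -hss s0 mul0r.
have u0 : u != 0 by apply: contraNneq s0 => u0; rewrite -huw u0 mul0r.
have w0 : w != 0 by apply: contraNneq s0 => w0; rewrite -huw w0 mulr0.
have Ep : s * E = s -> E = 1 by move=> h; apply: (mulfI s0); rewrite h mulr1.
have En : s * E = -s -> E = -1 by move=> h; apply: (mulfI s0); rewrite h mulrN1.
have T2 : forall c : L, 2 * T * s = 2 * c * s -> T = c.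
  by move=> c h; apply: (mulfI h2); apply: (mulIf s0).
have key : 2 * T * s = (u * A) * w + (w * B) * u.
  by rewrite -hAB -huw; ring.
split; [|split; [|split]] => -[hA [hB hE]].
- have E1 := Ep hE; rewrite E1 !mulr1 in hA hB; apply: T2.
  by rewrite key hA hB -huw; ring.
- have E1 := Ep hE; rewrite E1 !mulr1 in hA hB; apply: T2.
  by rewrite key hA hB -huw; ring.
- have E1 := En hE; rewrite E1 !mulrN1 in hA hB.
  have hA' : u * A = - w by rewrite -hA opprK.
  have hB' : w * B = u by rewrite -[u]opprK -hB opprK.
  apply: T2; rewrite key hA' hB'.
  have -> : 2 * 1 * s = (2 + s) - (2 - s) by ring.
  by rewrite -huu -hww; ring.
- have E1 := En hE; rewrite E1 !mulrN1 in hA hB.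
  have hA' : u * A = w by rewrite -[w]opprK -hA opprK.
  have hB' : w * B = - u by rewrite -hB opprK.
  apply: T2; rewrite key hA' hB'.
  have -> : 2 * -1 * s = (2 - s) - (2 + s) by ring.
  by rewrite -huu -hww; ring.
Qed.

Lemma red (L : comRingType) (z P Q K : L) : z^+8 = -1 -> P - Q = (z^+8+1)*K -> P = Q.
Proof. by move=> hz; rewrite hz addNr mul0r => /eqP; rewrite subr_eq0 => /eqP. Qed.
Ltac zred hz K := apply: (@red _ _ _ _ K hz); ring.
Ltac solve_id z hz := first [ zred hz (z - z) | zred hz (z^+7 - z) | zred hz (z - z^+7) | zred hz (z^+5 - z^+3) | zred hz (z^+3 - z^+5) | zred hz (z^+6 - z^+2) | zred hz (z^+2 - z^+6)].
Ltac solve_k z hz k := apply: k; split; [|split]; solve_id z hz.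

Lemma zfacts (L : comRingType) (z : L) : z^+8 = -1 ->
  (z^+2 - z^+6) * (z^+2 - z^+6) = 2 /\ (z - z^+7) * (z^+3 - z^+5) = z^+2 - z^+6 /\
  (z - z^+7) * (z - z^+7) = 2 + (z^+2 - z^+6) /\
  (z^+3 - z^+5) * (z^+3 - z^+5) = 2 - (z^+2 - z^+6).
Proof.
move=> hz; split; [|split; [|split]].
- zred hz (-2 + z^+4).
- zred hz (- z^+2 + z^+4).
- zred hz (-2 + z^+6).
- zred hz (-2 + z^+2).
Qed.

Lemma Lpart (L : fieldType) (p h : nat) (z : L) : p \in [pchar L] -> p = h.*2.+1 ->
  z^+8 = -1 ->
  let T := \sum_(0 <= k < (h %/ 2).+1) 'C(h, k.*2)%:R * (2^-1)^+k : L in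
  ((p %% 16 \in [:: 1; 15; 3; 13])%N -> T = 1) /\
  ((p %% 16 \in [:: 5; 11; 7; 9])%N -> T = -1).
Proof.
move=> pch hp hz T.
have pp : prime p := pcharf_prime pch.
have h2 : (2:L) != 0.
  rewrite -[2]/(2%:R) -(dvdn_pcharf pch 2); apply/negP => /dvdn_leq.
  have := prime_gt1 pp; rewrite hp; lia.
have [hss [huw [huu hww]]] := zfacts hz.
set u := z - z^+7 in huw huu hww *.
set w := z^+3 - z^+5 in huw huu hww *.
set s := z^+2 - z^+6 in hss huw huu hww *.
set t := s * 2^-1.
have htt : t * t = 2^-1.
  by rewrite /t mulrACA hss mulrA divff // mul1r.
set A := (1 + t)^+h; set B := (1 - t)^+h; set E : L := 2^+h.
have hAB : A + B = 2 * T.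
  rewrite /A /B /T [1 + t]addrC [1 - t]addrC !exprD1n -big_split /= even_sum htt //.
have z16 : z^+16 = 1 by rewrite (_ : 16 = 8 * 2)%N // exprM hz sqrrN expr1n.
have zp k : (z^+k)^+p = z^+((k * (p %% 16)) %% 16).
  by rewrite -exprM modnMmr expr_mod.
have F x : x^+p = pFrobenius_aut pch x by [].
have fr a b : (z^+a - z^+b)^+p = (z^+a)^+p - (z^+b)^+p.
  by rewrite F (pFrobenius_autB_comm _ (mulrC _ _)) -!F.
have hu : u^+p = z^+((1 * (p %% 16)) %% 16) - z^+((7 * (p %% 16)) %% 16).
  by rewrite /u -{1}[z]expr1 fr !zp.
have hw : w^+p = z^+((3 * (p %% 16)) %% 16) - z^+((5 * (p %% 16)) %% 16).
  by rewrite /w fr !zp.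
have hs : s^+p = z^+((2 * (p %% 16)) %% 16) - z^+((6 * (p %% 16)) %% 16).
  by rewrite /s fr !zp.
have i2 : (2:L)^-1 ^+ h * 2 ^+ h = 1 by rewrite -exprMn mulVf // expr1n.
have puE : u * A * E = u^+p.
  have e : 1 + t = u * u * 2^-1 by rewrite huu mulrDl divff.
  rewrite /A e /E exprMn -!mulrA i2 mulr1 hp exprS -expr2 -exprM mul2n //.
have pwE : w * B * E = w^+p.
  have e : 1 - t = w * w * 2^-1 by rewrite hww mulrBl divff.
  rewrite /B e /E exprMn -!mulrA i2 mulr1 hp exprS -expr2 -exprM mul2n //.
have psE : s * E = s^+p.
  by rewrite /E hp exprS -mul2n exprM expr2 hss.
have [k1 [k2 [k3 k4]]] := key E h2 hss huw huu hww hAB.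
rewrite puE pwE psE hu hw hs in k1 k2 k3 k4.
have r16 : (p %% 16 < 16)%N by rewrite ltn_mod.
have ro : odd (p %% 16).
  by rewrite (odd_mod p (erefl : odd 16 = false)) hp /= odd_double.
clear hu hw hs puE pwE psE.
move: (p %% 16)%N r16 ro k1 k2 k3 k4 => r.
do 16?[case: r => [|r] //=]; move=> _ _ k1 k2 k3 k4; rewrite ?inE /=; split=> // _.
all: rewrite /u /w /s in k1 k2 k3 k4.
all: repeat match goal with H : context [ ((?a * ?b) %% 16)%N ] |- _ =>
  let v := eval vm_compute in ((a * b) %% 16)%N in change ((a * b) %% 16)%N with v in H end.
all: first [solve_k z hz k1 | solve_k z hz k2 | solve_k z hz k3 | solve_k z hz k4].
Qed.

Unset Implicit Arguments.

Theorem corollary2p3 (p : nat) (hp : prime p) (hodd : odd p) :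
  let S : 'F_p := \sum_(0 <= k < (p %/ 4).+1)
                    ('C(4 * k, 2 * k))%:R / (32%:R ^+ k) in
  ((p %% 16 \in [:: 1; 15; 3; 13])%N -> S = 1) /\
  ((p %% 16 \in [:: 5; 11; 7; 9])%N -> S = -1).
Proof.
move=> S.
set h := (p %/ 2)%N.
have hph : p = h.*2.+1.
  by have := odd_double_half p; rewrite hodd /h divn2; lia.
have h2 : (2 : 'F_p) != 0.
  rewrite -[2]/(2%:R) -(dvdn_pcharf (pchar_Fp hp) 2); apply/negP => /dvdn_leq.
  have := prime_gt1 hp; rewrite hph; lia.
pose T := \sum_(0 <= k < (h %/ 2).+1) 'C(h, k.*2)%:R * (2^-1)^+k : 'F_p.
have ST : S = T.
  rewrite /S /T (_ : (p %/ 4 = h %/ 2)%N); last by rewrite /h -divnMA.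
  apply: eq_big_nat => k /andP[_ hk].
  have hk2 : (k.*2 <= h)%N by have := leq_trunc_div h 2; lia.
  rewrite (_ : (4 * k = (k.*2).*2)%N); last lia.
  rewrite (_ : (2 * k = k.*2)%N); last lia.
  rewrite (cbin_Fp hp hph hk2).
  have e4 : (-4 : 'F_p) ^+ k.*2 = ((2*2)^+2)^+k by rewrite -mul2n exprM sqrrN -natrM.
  have -> : (32%:R : 'F_p) = (2 * 2)^+2 * 2 by rewrite -natrM -natrX -natrM.
  rewrite e4 [(((2*2)^+2 * 2)^+k)]exprMn invfM; rewrite exprVn; field.
  by rewrite !expf_neq0 ?mulf_neq0.
rewrite ST.
pose q : {poly 'F_p} := 'X^8 + 1%:P.
have qsz : size q = 9%N by rewrite size_XnaddC.
have nzq : q != 0 by rewrite -size_poly_eq0 qsz.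
have [L splitL] := FinSplittingFieldFor nzq.
have [zs Dq _] := splitL.
pose f := in_alg L.
have rz z : root (map_poly f q) z = (z ^+ 8 == -1).
  rewrite /root rmorphD /= map_polyXn map_polyC /=. rewrite scale1r.
  by rewrite hornerD hornerXn hornerC addr_eq0.
have [z hz] : exists z : L, z ^+ 8 = -1.
  case: zs Dq => [|z zs] Dq.
    by move: (eqp_size Dq); rewrite big_nil size_poly1 size_map_poly qsz.
  exists z; apply/eqP; rewrite -rz (eqp_root Dq) root_prod_XsubC mem_head //.
have pchL : p \in [pchar L] by rewrite pchar_lalg pchar_Fp.
have [l1 l2] := Lpart pchL hph hz.
have fT : f T = \sum_(0 <= k < (h %/ 2).+1) 'C(h, k.*2)%:R * (2^-1)^+k.
  rewrite /f /T rmorph_sum; apply: eq_bigr => k _.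
  by rewrite rmorphM rmorph_nat rmorphXn fmorphV rmorph_nat.
split=> hr; apply: (fmorph_inj f).
  by apply: etrans fT _; rewrite l1 // rmorph1.
by apply: etrans fT _; rewrite l2 // rmorphN rmorph1.
Qed.
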